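(* Let $X$ be a metric continuum with metric $\rho\le 1$, and let $a,b,c\subset X$ be nonempty closed sets with $a\cap b\cap c=\emptyset$. Define $f:X\to\mathbb{R}^3$ by $f(p)=(\kappa_a(p),\kappa_b(p),\kappa_c(p))$ with $\kappa_a(p)=\rho(p,a)/(\rho(p,a)+\rho(p,b)+\rho(p,c))$ and $\kappa_b,\kappa_c$ analogous. Let $T=\{(t_1,t_2,t_3):t_i\ge0,\ t_1+t_2+t_3=1\}$, $\partial T$ its boundary (relative to the plane $t_1+t_2+t_3=1$), and $h:\partial T\times[0,1]\to T$, $h(v,t)=(1-t)v+t(\tfrac13,\tfrac13,\tfrac13)$. Let $X'=\{(p,v,t)\in X\times\partial T\times[0,1]: h(v,t)=f(p)\}$ and $q:X'\to X$, $q(p,v,t)=p$. Let $A$, $B$, $C$ be the sides of $T$ opposite to $(1,0,0)$, $(0,1,0)$, $(0,0,1)$ respectively, and put $x=X'\cap(X\times A\times[0,1])$, $y=X'\cap(X\times B\times[0,1])$, $z=X'\cap(X\times C\times[0,1])$. Then $X'$ is a metric continuum, $q$ is a continuous closed monotone surjection (all fibres are connected), and $q^{-1}(a)\subset x$, $q^{-1}(b)\subset y$, $q^{-1}(c)\subset z$, $x\cap y\cap z=\emptyset$ and $x\cup y\cup z=X'$.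
   Context: A metric continuum is a compact connected metric space. $\rho(p,a)$ denotes the distance from the point $p$ to the set $a$. A map is monotone if all its point-inverses are connected. *)

(* Defs.v *)
From HB Require Import structures.
From mathcomp Require Import all_boot all_order all_algebra.
From mathcomp Require Import all_classical all_reals all_analysis.
Set Implicit Arguments. Unset Strict Implicit. Unset Printing Implicit Defensive.
Import Order.TTheory GRing.Theory Num.Theory.
Import numFieldNormedType.Exports.
Local Open Scope classical_set_scope.
Local Open Scope ring_scope.

Section Defs.
Variable R : realType.

Definition rho (X : metricType R) (p : X) (a : set X) : R :=
  inf [set mdist p y | y in a].

Definition kappa (X : metricType R) (a b c : set X) (p : X) : R :=
  rho p a / (rho p a + rho p b + rho p c).

Definition fmap (X : metricType R) (a b c : set X) (p : X) : 'rV[R]_3 :=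
  \row_(i < 3) (if val i == 0%N then kappa a b c p
                else if val i == 1%N then kappa b c a p
                else kappa c a b p).

Definition plane3 : set 'rV[R]_3 := [set v | \sum_(i < 3) v ord0 i = 1].

Definition simplexT : set 'rV[R]_3 :=
  [set v | (forall i, 0 <= v ord0 i) /\ \sum_(i < 3) v ord0 i = 1].

Definition rel_interior (P S : set 'rV[R]_3) : set 'rV[R]_3 :=
  [set v | P v /\ exists2 e : R, 0 < e & forall w, P w -> ball v e w -> S w].

Definition rel_boundary (P S : set 'rV[R]_3) : set 'rV[R]_3 :=
  [set v | P v /\ closure S v /\ ~ rel_interior P S v].

Definition bdT : set 'rV[R]_3 := rel_boundary plane3 simplexT.

Definition unit_interval : set R := [set t | 0 <= t <= 1].

Definition hmap (v : 'rV[R]_3) (t : R) : 'rV[R]_3 :=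
  (1 - t) *: v + t *: const_mx (3%:R^-1).

Definition side (i : 'I_3) : set 'rV[R]_3 := [set v | simplexT v /\ v ord0 i = 0].

Definition Xprime (X : metricType R) (a b c : set X) : set (X * ('rV[R]_3 * R)) :=
  [set w | bdT w.2.1 /\ unit_interval w.2.2 /\ hmap w.2.1 w.2.2 = fmap a b c w.1].

Definition Xside (X : metricType R) (a b c : set X) (i : 'I_3)
  : set (X * ('rV[R]_3 * R)) :=
  Xprime a b c `&` [set w | side i w.2.1].

End Defs.

(* Main.v *)
From Pilot Require Import Defs.
From HB Require Import structures.
From mathcomp Require Import all_boot all_order all_algebra.
From mathcomp Require Import all_classical all_reals all_analysis.
From mathcomp Require Import ring lra.
Import Order.TTheory GRing.Theory Num.Theory.
Import numFieldNormedType.Exports.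
Import Num.Def.
Import Pilot.Defs.
Local Open Scope classical_set_scope.
Local Open Scope ring_scope.
Section S.
Variable R : realType.
Lemma fst_cont (T U : topologicalType) : continuous (@fst T U).
Proof. by move=> x; apply: cvg_fst. Qed.
Lemma snd_cont (T U : topologicalType) : continuous (@snd T U).
Proof. by move=> x; apply: cvg_snd. Qed.
Lemma ord3P (i : 'I_3) : i = ord0 \/ i = lift ord0 ord0 \/ i = ord_max.
Proof.
case: i => [[|[|[|k]]] Hk].
- by left; apply: val_inj.
- by right; left; apply: val_inj.
- by right; right; apply: val_inj.
- by [].
Qed.
Lemma sum3 (F : 'I_3 -> R) : \sum_(i < 3) F i = F ord0 + F (lift ord0 ord0) + F ord_max.
Proof.
rewrite !big_ord_recl big_ord0 addr0 addrA; congr (_ + _ + F _); exact: val_inj.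
Qed.
Lemma coordc (T : topologicalType) (f : T -> 'rV[R]_3) (i : 'I_3) : continuous f -> continuous (fun x => f x ord0 i).
Proof. move=> cf x; exact: (continuous_comp (cf x) (@coord_continuous R 1 3 ord0 i (f x))). Qed.
Lemma ball_coord (v w : 'rV[R]_3) e i : ball v e w -> `|v ord0 i - w ord0 i| < e.
Proof.
rewrite mx_norm_ball /ball_ /= => H.
have {}H : mx_norm (v - w) < e := H.
apply: le_lt_trans H; rewrite mx_normrE.
have := @le_bigmax _ _ _ 0 (fun ij : 'I_1 * 'I_3 => `|(v - w) ij.1 ij.2|) (ord0, i).
by rewrite /= !mxE.
Qed.
Lemma ball_of_coord (v w : 'rV[R]_3) e : 0 < e -> (forall i, `|v ord0 i - w ord0 i| < e) -> ball v e w.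
Proof.
move=> e0 H; rewrite mx_norm_ball /ball_ /=.
suff : mx_norm (v - w) < e by [].
rewrite mx_normrE.
apply/bigmax_ltP; split => // -[a j] _ /=.
by rewrite (ord1 a) !mxE.
Qed.
Lemma coord_cont (i : 'I_3) : continuous (fun v : 'rV[R]_3 => v ord0 i).
Proof. exact: (fun v => @coord_continuous R 1 3 ord0 i v). Qed.
Lemma contD (T : topologicalType) (f g : T -> R) : continuous f -> continuous g -> continuous (fun x => f x + g x).
Proof. move=> cf cg x; exact: (cvgD (cf x) (cg x)). Qed.
Lemma contM (T : topologicalType) (f g : T -> R) : continuous f -> continuous g -> continuous (fun x => f x * g x).
Proof. move=> cf cg x; exact: (cvgM (cf x) (cg x)). Qed.
Lemma contN (T : topologicalType) (f : T -> R) : continuous f -> continuous (fun x => - f x).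
Proof. move=> cf x; exact: (cvgN (cf x)). Qed.
Lemma contV (T : topologicalType) (f : T -> R) : (forall x, f x != 0) -> continuous f -> continuous (fun x => (f x)^-1).
Proof. move=> nz cf x; exact: (cvgV (nz x) (cf x)). Qed.
Lemma contC (T : topologicalType) (c : R) : continuous (fun _ : T => c).
Proof. by move=> x; apply: cvg_cst. Qed.
Lemma sum_cont : continuous (fun v : 'rV[R]_3 => \sum_(i < 3) v ord0 i).
Proof.
have -> : (fun v : 'rV[R]_3 => \sum_(i < 3) v ord0 i) =
  (fun v => v ord0 ord0 + v ord0 (lift ord0 ord0) + v ord0 ord_max).
  by apply/funext => v; rewrite sum3.
by apply: contD; [apply: contD|]; apply: coord_cont.
Qed.
Lemma closed_pre (T U : topologicalType) (f : T -> U) D : continuous f -> closed D -> closed (f @^-1` D).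
Proof. by move=> cf; apply: preimage_closed => x _; apply: cf. Qed.
Lemma closed_simplexT : closed (@simplexT R).
Proof.
have -> : @simplexT R = (fun v : 'rV[R]_3 => v ord0 ord0) @^-1` [set x : R | 0 <= x] `&`
  (fun v : 'rV[R]_3 => v ord0 (lift ord0 ord0)) @^-1` [set x : R | 0 <= x] `&`
  (fun v : 'rV[R]_3 => v ord0 ord_max) @^-1` [set x : R | 0 <= x] `&`
  (fun v : 'rV[R]_3 => \sum_(i < 3) v ord0 i) @^-1` [set x : R | x = 1].
  apply/seteqP; split => v /=.
    by move=> [H1 H2]; split => //; do !split; apply: H1.
  move=> [[[H0 H1] H2] H3]; split => // i.
  by case: (ord3P i) => [->|[->|->]].
apply: closedI; last by apply: closed_pre; [exact: sum_cont| exact: closed_eq].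
apply: closedI; last by apply: closed_pre; [exact: coord_cont| exact: closed_ge].
by apply: closedI; (apply: closed_pre; [exact: coord_cont| exact: closed_ge]).
Qed.
Lemma simplex_le1 (v : 'rV[R]_3) i : simplexT v -> v ord0 i <= 1.
Proof.
move=> [H0 <-]; rewrite (bigD1 i) //= lerDl; apply: sumr_ge0 => j _; exact: H0.
Qed.
Lemma bdTE : @bdT R = [set v | simplexT v /\ exists i, v ord0 i = 0].
Proof.
apply/seteqP; split => v.
- case=> Pv [Cv NI].
  have hE := (closure_id (@simplexT R)).1 closed_simplexT.
  rewrite -hE in Cv; split => //.
  apply: contrapT => Hn; apply: NI; split => //.
  have vp : forall i, 0 < v ord0 i.
    move=> i; rewrite lt_neqAle; case: Cv => -> _; rewrite andbT eq_sym.
    by apply/eqP => h; apply: Hn; exists i.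
  exists (minr (v ord0 ord0) (minr (v ord0 (lift ord0 ord0)) (v ord0 ord_max))).
    by rewrite !lt_min !vp.
  move=> w Pw Bw; split => // i.
  have := @ball_coord _ _ _ i Bw => /ltr_normlW.
  have : minr (v ord0 ord0) (minr (v ord0 (lift ord0 ord0)) (v ord0 ord_max)) <= v ord0 i.
    by case: (ord3P i) => [->|[->|->]]; rewrite !ge_min lexx ?orbT.
  move=> h1 h2; lra.
- case=> Sv [i vi]; split; first by case: Sv.
  split; first exact: subset_closure.
  case=> _ [e e0 H].
  pose g (k : 'I_3) : R := if k == i then -(e/2) else e/4.
  pose w : 'rV[R]_3 := \row_k (v ord0 k + g k).
  have hsg : \sum_(k < 3) g k = 0.
    rewrite (bigD1 i) //= /g eqxx.
    rewrite (eq_bigr (fun _ => e/4)); last by move=> k /negbTE ->.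
    rewrite sumr_const cardC1 card_ord /= mulr2n.
    lra.
  have Pw : plane3 w.
    rewrite /plane3 /= (eq_bigr (fun k => v ord0 k + g k)); last by move=> k _; rewrite mxE.
    by rewrite big_split /= hsg addr0; case: Sv.
  have Bw : ball v e w.
    apply: ball_of_coord => // k; rewrite mxE opprD addrA subrr add0r normrN /g.
    case: (k == i); rewrite ?normrN gtr0_norm ?divr_gt0 //.
      by rewrite ltr_pdivrMr // ltr_pMr // ltr1n.
    by rewrite ltr_pdivrMr // ltr_pMr // ltr1n.
  have [H0 _] := H w Pw Bw.
  have := H0 i; rewrite mxE vi add0r /g eqxx oppr_ge0 => h.
  by have := divr_gt0 e0 (ltr0n R 2); rewrite ltNge h.
Qed.
Lemma closed_bdT : closed (@bdT R).
Proof.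
  rewrite bdTE.
  have -> : [set v : 'rV[R]_3 | simplexT v /\ exists i, v ord0 i = 0] =
     @simplexT R `&` (((fun v : 'rV[R]_3 => v ord0 ord0) @^-1` [set 0 : R] `|`
       (fun v : 'rV[R]_3 => v ord0 (lift ord0 ord0)) @^-1` [set 0 : R]) `|`
       (fun v : 'rV[R]_3 => v ord0 ord_max) @^-1` [set 0 : R]).
    apply/seteqP; split => v /=.
      move=> [S [i h]]; split => //.
      by case: (ord3P i) h => [->|[->|->]] h; [left; left| left; right| right].
    by move=> [S [[h|h]|h]]; split => //; eexists; exact: h.
  apply: closedI; first exact: closed_simplexT.
  apply: closedU; first apply: closedU.
  1-3: by apply: closed_pre; [exact: coord_cont | exact: closed_eq].
Qed.
Lemma compact_bdT : compact (@bdT R).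
Proof.
apply: (@subclosed_compact _ _ [set v : 'rV[R]_3 | forall i, `[0, 1]%classic (v ord0 i)]).
- exact: closed_bdT.
- exact: rV_compact (fun i => @segment_compact R 0 1).
- rewrite bdTE => v [S _] i; rewrite set_itvcc /=.
  by rewrite (@simplex_le1 _ i S) andbT; case: S => h _; apply: h.
Qed.

Definition vert (j : 'I_3) : 'rV[R]_3 := \row_l ((l == j)%:R).
Definition seg (j k : 'I_3) (t : R) : 'rV[R]_3 := t *: vert j + (1 - t) *: vert k.

Lemma seg1 j k : seg j k 1 = vert j.
Proof. by rewrite /seg scale1r subrr scale0r addr0. Qed.
Lemma seg0 j k : seg j k 0 = vert k.
Proof. by rewrite /seg scale0r add0r subr0 scale1r. Qed.

Lemma seg_cont j k : continuous (seg j k).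
Proof.
move=> t; rewrite /seg; apply: cvgD.
  by apply: cvgZ; [exact: cvg_id | exact: cvg_cst].
apply: cvgZ; last exact: cvg_cst.
by apply: cvgB; [exact: cvg_cst | exact: cvg_id].
Qed.

Lemma side_seg i j k : i != j -> i != k -> j != k ->
  (forall l, l = i \/ l = j \/ l = k) ->
  side i = [set seg j k t | t in `[0, 1]%classic].
Proof.
move=> hij hik hjk cov.
have s3 : forall v : 'rV[R]_3, \sum_(l < 3) v ord0 l = v ord0 i + v ord0 j + v ord0 k.
  move=> v; rewrite (bigD1 i) // (bigD1 j) /=; last by rewrite eq_sym.
  rewrite (bigD1 k) /=; last by rewrite eq_sym hik eq_sym hjk.
  rewrite !addrA.
  rewrite big1 ?addr0 ?addrA // => l /andP [/andP [h1 h2] h3].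
  by case: (cov l) h1 h2 h3 => [->|[->|->]]; rewrite eqxx ?andbF.
have segE : forall t l, seg j k t ord0 l = t * (l == j)%:R + (1 - t) * (l == k)%:R.
  by move=> t l; rewrite /seg !mxE.
apply/seteqP; split => v.
- move=> [S vi]; exists (v ord0 j).
    rewrite set_itvcc /= (@simplex_le1 _ j S) andbT; by case: S => h _; apply: h.
  apply/rowP => l; rewrite (ord1 ord0) segE.
  have sum1 : v ord0 i + v ord0 j + v ord0 k = 1 by rewrite -s3; case: S.
  case: (cov l) => [->|[->|->]].
  - by rewrite (negbTE hij) (negbTE hik) vi /=; lra.
  - by rewrite eqxx (negbTE hjk) /=; lra.
  - rewrite eqxx eq_sym (negbTE hjk) vi /= in sum1 *; lra.
- move=> [t]; rewrite set_itvcc /= => /andP [t0 t1] <-.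
  split; last by rewrite segE (negbTE hij) (negbTE hik) /=; lra.
  split.
    move=> l; rewrite segE; apply: addr_ge0; apply: mulr_ge0 => //; rewrite ?subr_ge0 //.
  rewrite s3 !segE (negbTE hij) (negbTE hik) eqxx (negbTE hjk) eq_sym (negbTE hjk) eqxx /=.
  lra.
Qed.
Definition i0 : 'I_3 := ord0.
Definition i1 : 'I_3 := lift ord0 ord0.
Definition i2 : 'I_3 := ord_max.
Lemma side0E : side i0 = [set seg i1 i2 t | t in `[0, 1]%classic].
Proof. by apply: side_seg => // l; case: (ord3P l) => [->|[->|->]]; auto. Qed.
Lemma side1E : side i1 = [set seg i2 i0 t | t in `[0, 1]%classic].
Proof. by apply: side_seg => // l; case: (ord3P l) => [->|[->|->]]; auto. Qed.
Lemma side2E : side i2 = [set seg i0 i1 t | t in `[0, 1]%classic].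
Proof. by apply: side_seg => // l; case: (ord3P l) => [->|[->|->]]; auto. Qed.
Lemma connected_side j k : connected [set seg j k t | t in `[0, 1]%classic].
Proof.
apply: connected_continuous_connected; first exact: segment_connected.
apply: continuous_subspaceT; exact: seg_cont.
Qed.
Lemma bdT_sides : @bdT R = side i0 `|` side i1 `|` side i2.
Proof.
rewrite bdTE; apply/seteqP; split => v /=.
  move=> [S [i h]].
  by case: (ord3P i) h => [->|[->|->]] h; [left; left| left; right| right].
by move=> [[[S h]|[S h]]|[S h]]; split => //; eexists; exact: h.
Qed.
Lemma in01 : `[0, 1]%classic (0 : R) /\ `[0, 1]%classic (1 : R).
Proof. by rewrite set_itvcc /=; split; apply/andP; split => //; exact: ler01. Qed.
Lemma connected_bdT : connected (@bdT R).
Proof.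
rewrite bdT_sides; apply: connectedU; last by rewrite side2E; exact: connected_side.
  exists (vert i1); split.
    left; rewrite side0E; exists 1; [exact: in01.2| exact: seg1].
  rewrite side2E; exists 0; [exact: in01.1| exact: seg0].
apply: connectedU; [|rewrite side0E; exact: connected_side|rewrite side1E; exact: connected_side].
exists (vert i2); split.
  rewrite side0E; exists 0; [exact: in01.1| exact: seg0].
rewrite side1E; exists 1; [exact: in01.2| exact: seg1].
Qed.
Lemma hmapE (v : 'rV[R]_3) t i : hmap v t ord0 i = (1 - t) * v ord0 i + t / 3%:R.
Proof. by rewrite /hmap !mxE. Qed.

Lemma bdT_ge0 (v : 'rV[R]_3) i : bdT v -> 0 <= v ord0 i.
Proof. by rewrite bdTE => -[[h _] _]; apply: h. Qed.

Lemma hmap_min (v : 'rV[R]_3) t : bdT v -> t <= 1 ->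
  (forall i, t / 3%:R <= hmap v t ord0 i) /\ exists i, hmap v t ord0 i = t / 3%:R.
Proof.
move=> bv t1; split.
  move=> i; rewrite hmapE lerDr; apply: mulr_ge0; [by rewrite subr_ge0| exact: bdT_ge0].
move: bv; rewrite bdTE => -[_ [i vi]]; exists i; by rewrite hmapE vi mulr0 add0r.
Qed.

Lemma hmap_t (v v' : 'rV[R]_3) t t' : bdT v -> bdT v' -> t <= 1 -> t' <= 1 ->
  hmap v t = hmap v' t' -> t = t'.
Proof.
move=> bv bv' t1 t1' e.
have [h1 [i hi]] := @hmap_min _ _ bv t1.
have [h1' [i' hi']] := @hmap_min _ _ bv' t1'.
have := h1 i'; have := h1' i; rewrite e hi' -e hi => a b.
lra.
Qed.

Lemma hmap_v (v v' : 'rV[R]_3) t : t < 1 -> hmap v t = hmap v' t -> v = v'.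
Proof.
move=> t1 e; apply/rowP => j.
move/rowP: e => /(_ j); rewrite !hmapE => /addIr.
apply: mulfI; rewrite subr_eq0; apply/eqP => h; move: t1; rewrite -h ltxx //.
Qed.

Lemma hmap1 (v : 'rV[R]_3) : hmap v 1 = const_mx 3%:R^-1.
Proof. by rewrite /hmap subrr scale0r add0r scale1r. Qed.

Lemma vert_bdT : bdT (vert i0).
Proof. rewrite bdT_sides; left; right; rewrite side1E; exists 0; [exact: in01.1| exact: seg0]. Qed.

Lemma hmap_surj (s : 'rV[R]_3) : simplexT s ->
  exists v t, bdT v /\ unit_interval t /\ hmap v t = s.
Proof.
move=> S; have [s0 s1] := S; rewrite /= sum3 in s1.
have [k hk] : exists k, forall j, s ord0 k <= s ord0 j.
  have sp := fun j => s0 j.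
  case: (leP (s ord0 ord0) (s ord0 (lift ord0 ord0))) => hab;
  case: (leP (s ord0 ord0) (s ord0 ord_max)) => hac;
  case: (leP (s ord0 (lift ord0 ord0)) (s ord0 ord_max)) => hbc;
  first [ exists ord0; move=> j; case: (ord3P j) => [->|[->|->]]; lra
        | exists (lift ord0 ord0); move=> j; case: (ord3P j) => [->|[->|->]]; lra
        | exists ord_max; move=> j; case: (ord3P j) => [->|[->|->]]; lra ].
have [m mE] : exists m, m = s ord0 k by eexists.
rewrite -mE in hk.
have m0 : 0 <= m by rewrite mE; apply: s0.
have m13 : m * 3%:R <= 1.
  move: (hk ord0) (hk (lift ord0 ord0)) (hk ord_max) => ha hb hc; lra.
case: (leP 1 (m * 3%:R)) => hm.
  exists (vert i0), 1; split; first exact: vert_bdT.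
  split; first by rewrite /unit_interval /= ler01 lexx.
  rewrite hmap1; apply/rowP => j; rewrite mxE.
  move: (hk ord0) (hk (lift ord0 ord0)) (hk ord_max) => ha hb hc.
  by case: (ord3P j) => [->|[->|->]]; lra.
pose t := m * 3%:R.
have t1 : 1 - t != 0 by rewrite subr_eq0; apply/eqP => h; move: hm; rewrite -/t -h ltxx.
have t1p : 0 < 1 - t by rewrite subr_gt0.
pose v : 'rV[R]_3 := (1 - t)^-1 *: (s - t *: const_mx 3%:R^-1).
have vE : forall j, v ord0 j = (s ord0 j - m) / (1 - t).
  move=> j; rewrite !mxE mulrC; congr (_ * _); rewrite /t; congr (_ - _).
  by rewrite -mulrA mulfV ?mulr1 // pnatr_eq0.
exists v, t; split.
  rewrite bdTE; split; last by exists k; rewrite vE -mE subrr mul0r.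
  split.
    move=> j; rewrite vE; apply: divr_ge0; [by rewrite subr_ge0| exact: ltW].
  rewrite /= sum3 !vE -!mulrDl.
  have -> : s ord0 ord0 - m + (s ord0 (lift ord0 ord0) - m) + (s ord0 ord_max - m) = 1 - t.
    by rewrite /t; lra.
  exact: divff.
split.
  rewrite /unit_interval /= /t; apply/andP; split; [by apply: mulr_ge0| exact: ltW].
apply/rowP => j; rewrite hmapE vE.
rewrite mulrCA mulfV // mulr1 /t; by field.
Qed.
Section Rho.
Variable X : metricType R.
Implicit Types (p q : X) (a : set X).

Lemma rho_lb p a : has_lbound [set mdist p y | y in a].
Proof. by exists 0 => _ [y _ <-]; apply: mdist_ge0. Qed.

Lemma rho_ge0 p a : a !=set0 -> 0 <= rho p a.
Proof.
move=> [y ay]; apply: lb_le_inf; first by exists (mdist p y), y.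
by move=> _ [z _ <-]; apply: mdist_ge0.
Qed.

Lemma rho_le p a y : a y -> rho p a <= mdist p y.
Proof. by move=> ay; apply: (ge_inf (rho_lb p a)); exists y. Qed.

Lemma rho_lip1 p q a : a !=set0 -> rho p a <= mdist p q + rho q a.
Proof.
move=> [y ay]; rewrite -lerBlDl; apply: lb_le_inf; first by exists (mdist q y), y.
move=> _ [z az <-]; rewrite lerBlDl.
exact: (le_trans (rho_le p _ _ az) (metric_triangle _ _ _)).
Qed.

Lemma rho_lip p q a : a !=set0 -> `|rho p a - rho q a| <= mdist p q.
Proof.
move=> a0; rewrite ler_norml; apply/andP; split.
  rewrite lerBrDl; have := rho_lip1 q p _ a0; rewrite metric_sym; lra.
by have := rho_lip1 p q _ a0; lra.
Qed.

Lemma rho_cont a : a !=set0 -> continuous (fun p => rho p a).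
Proof.
move=> a0 p; apply/cvgrPdist_lt => e e0.
apply: filterS (nbhsx_ballx p e e0) => t; rewrite ballEmdist /= => h.
exact: le_lt_trans (rho_lip p t _ a0) h.
Qed.

Lemma rho_in0 p a : a p -> rho p a = 0.
Proof.
move=> ap; apply/eqP; rewrite eq_le rho_ge0; last by exists p.
by rewrite andbT; have := rho_le p _ _ ap; rewrite mdistxx.
Qed.

Lemma rho0_in p a : closed a -> a !=set0 -> rho p a = 0 -> a p.
Proof.
move=> ca a0 r0; rewrite ((closure_id a).1 ca) => B /nbhs_ballP [e e0 hB].
have [_ [y ay <-] hy] := @inf_lt R [set mdist p y | y in a] e (image_nonempty _ a0) ltac:(by rewrite -/(rho p a) r0).
exists y; split => //; apply: hB; rewrite ballEmdist /=; exact: hy.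
Qed.
End Rho.
Lemma cont_comp (T U V : topologicalType) (f : T -> U) (g : U -> V) :
  continuous f -> continuous g -> continuous (fun x => g (f x)).
Proof. by move=> cf cg x; apply: (continuous_comp (cf x) (cg (f x))). Qed.
Arguments cont_comp {T U V f g}.
Arguments fst_cont {T U}.
Arguments snd_cont {T U}.

Section Fmap.
Variable X : metricType R.
Variables a b c : set X.
Hypotheses (a_closed : closed a) (b_closed : closed b) (c_closed : closed c).
Hypotheses (a_ne : a !=set0) (b_ne : b !=set0) (c_ne : c !=set0).
Hypothesis abc0 : a `&` b `&` c = set0.

Definition Dn (p : X) := rho p a + rho p b + rho p c.

Lemma Dn_gt0 p : 0 < Dn p.
Proof.
have ha := @rho_ge0 _ p _ a_ne; have hb := @rho_ge0 _ p _ b_ne; have hc := @rho_ge0 _ p _ c_ne.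
rewrite lt_neqAle; apply/andP; split; last by rewrite /Dn; lra.
apply/eqP => h.
have ea : rho p a = 0 by move: h; rewrite /Dn; lra.
have eb : rho p b = 0 by move: h; rewrite /Dn; lra.
have ec : rho p c = 0 by move: h; rewrite /Dn; lra.
have : (a `&` b `&` c) p.
  by split; [split|]; apply: rho0_in.
by rewrite abc0.
Qed.

Lemma Dn_neq0 p : Dn p != 0.
Proof. by rewrite gt_eqF // Dn_gt0. Qed.

Lemma fmap0 p : fmap a b c p ord0 ord0 = rho p a / Dn p.
Proof. by rewrite /fmap mxE /= /kappa. Qed.
Lemma fmap1 p : fmap a b c p ord0 (lift ord0 ord0) = rho p b / Dn p.
Proof. by rewrite /fmap mxE /= /kappa /Dn; congr (_ / _); ring. Qed.
Lemma fmap2 p : fmap a b c p ord0 ord_max = rho p c / Dn p.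
Proof. by rewrite /fmap mxE /= /kappa /Dn; congr (_ / _); ring. Qed.

Lemma fmap_simplex p : simplexT (fmap a b c p).
Proof.
split.
  move=> i; case: (ord3P i) => [->|[->|->]]; rewrite ?fmap0 ?fmap1 ?fmap2;
  apply: divr_ge0; (apply: rho_ge0 => // ) || (exact: ltW (Dn_gt0 p)).
rewrite /= sum3 fmap0 fmap1 fmap2 -!mulrDl; exact: divff (Dn_neq0 p).
Qed.

Lemma Dn_cont : continuous Dn.
Proof. by apply: contD; [apply: contD|]; apply: rho_cont. Qed.

Lemma fmap_cont i : continuous (fun p => fmap a b c p ord0 i).
Proof.
have H : forall d, d !=set0 -> continuous (fun p => rho p d / Dn p).
  move=> d d0; apply: contM; first exact: rho_cont.
  apply: contV; [exact: Dn_neq0 | exact: Dn_cont].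
case: (ord3P i) => [->|[->|->]].
- by rewrite (_ : (fun p => _) = fun p => rho p a / Dn p); [exact: H|apply/funext => p; exact: fmap0].
- by rewrite (_ : (fun p => _) = fun p => rho p b / Dn p); [exact: H|apply/funext => p; exact: fmap1].
- by rewrite (_ : (fun p => _) = fun p => rho p c / Dn p); [exact: H|apply/funext => p; exact: fmap2].
Qed.

Local Notation XT := (X * ('rV[R]_3 * R))%type.
Definition gco (i : 'I_3) (w : XT) : R := hmap w.2.1 w.2.2 ord0 i - fmap a b c w.1 ord0 i.

Lemma c21 : continuous (fun w : XT => w.2.1).
Proof. exact: (cont_comp snd_cont fst_cont). Qed.
Lemma c22 : continuous (fun w : XT => w.2.2).
Proof. exact: (cont_comp snd_cont snd_cont). Qed.

Lemma gco_cont i : continuous (gco i).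
Proof.
rewrite (_ : gco i = fun w => (1 - w.2.2) * w.2.1 ord0 i + w.2.2 / 3%:R - fmap a b c w.1 ord0 i); last first.
  by apply/funext => w; rewrite /gco hmapE.
apply: contD; last by apply: contN; exact: (cont_comp fst_cont (fmap_cont i)).
apply: contD; last by apply: contM; [exact: c22|exact: contC].
apply: contM; last exact: (cont_comp c21 (coord_cont i)).
by apply: contD; [exact: contC| apply: contN; exact: c22].
Qed.

Lemma Xprime_closed : closed (Xprime a b c).
Proof.
have -> : Xprime a b c = (fun w : XT => w.2.1) @^-1` @bdT R `&` (fun w : XT => w.2.2) @^-1` [set t : R | 0 <= t]
   `&` (fun w : XT => w.2.2) @^-1` [set t : R | t <= 1] `&` gco ord0 @^-1` [set 0 : R]
   `&` gco (lift ord0 ord0) @^-1` [set 0 : R] `&` gco ord_max @^-1` [set 0 : R].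
  apply/seteqP; split => w /=.
    move=> [h1 [/andP [h2 h3] h4]]; rewrite /gco h4 !subrr; repeat split => //.
  move=> [[[[[h1 h2] h3] g0] g1] g2]; split => //; split; first by apply/andP.
  apply/rowP => j; case: (ord3P j) => [->|[->|->]]; apply/eqP; rewrite -subr_eq0; apply/eqP => //.
apply: closedI; last by apply: closed_pre; [exact: gco_cont|exact: closed_eq].
apply: closedI; last by apply: closed_pre; [exact: gco_cont|exact: closed_eq].
apply: closedI; last by apply: closed_pre; [exact: gco_cont|exact: closed_eq].
apply: closedI; last by apply: closed_pre; [exact: c22|exact: closed_le].
apply: closedI; last by apply: closed_pre; [exact: c22|exact: closed_ge].
by apply: closed_pre; [exact: c21|exact: closed_bdT].
Qed.

Lemma Xprime_compact : compact [set: X] -> compact (Xprime a b c).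
Proof.
move=> cX; have K : compact ([set: X] `*` (@bdT R `*` `[(0:R), 1]%classic)).
  apply: compact_setX => //; apply: compact_setX; [exact: compact_bdT| exact: segment_compact].
apply: (subclosed_compact Xprime_closed K).
move=> w [h1 [h2 _]]; split => //; split => //; by rewrite set_itvcc.
Qed.
End Fmap.
End S.

Lemma conn_monotone (T U : topologicalType) (A : set T) (f : T -> U) :
  (forall G, closed G -> closed (f @` (A `&` G))) -> f @` A = setT ->
  connected [set: U] ->
  (forall u, connected (A `&` f @^-1` [set u])) -> connected A.
Proof.
move=> fcl fsurj cU fib; apply: contrapT => /connectedPn [E [E0 AE [s1 s2]]].
have EA : forall bb, E bb = A `&` closure (E bb).
  move=> bb; apply/seteqP; split => x.
    move=> h; split; last exact: subset_closure.
    by rewrite AE; case: bb h => h; [right|left].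
  move=> [+ hc]; rewrite AE; case: bb hc => hc [] // h.
  - have : (E false `&` closure (E true)) x by [].
    by rewrite s2.
  - have : (closure (E false) `&` E true) x by [].
    by rewrite s1.
have Cl : forall bb, closed (f @` E bb).
  by move=> bb; rewrite EA; apply: fcl; apply: closed_closure.
have disj : f @` E false `&` f @` E true = set0.
  apply/seteqP; split => // u [[x0 h0 e0] [x1 h1 e1]].
  suff : ~ connected (A `&` f @^-1` [set u]) by apply; exact: fib u.
  apply/connectedPn.
  exists (fun bb => (A `&` f @^-1` [set u]) `&` E bb); split.
  - case; [exists x1| exists x0]; (split; [split|]) => //; rewrite AE; by [left|right].
  - apply/seteqP; split => x.
      move=> [hA hu]; have : (E false `|` E true) x by rewrite -AE.
      case=> h; [left|right]; exact: (conj (conj hA hu) h).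
    by move=> [[h _]|[h _]].
  - split.
      apply/seteqP; split => // x [hc [_ h]].
      have : (closure (E false) `&` E true) x.
        by split => //; apply: (closureS _ hc) => y [].
      by rewrite s1.
    apply/seteqP; split => // x [[_ h] hc].
    have : (E false `&` closure (E true)) x.
      by split => //; apply: (closureS _ hc) => y [].
    by rewrite s2.
suff : ~ connected [set: U] by apply.
apply/connectedPn.
exists (fun bb => f @` E bb); split.
- by move=> bb; have [x hx] := E0 bb; exists (f x), x.
- by rewrite -fsurj AE image_setU.
- have c0 := (closure_id _).1 (Cl false); have c1 := (closure_id _).1 (Cl true).
  by rewrite /separated -c0 -c1; split => //; rewrite setIC.
Qed.

Lemma pair_cont (T U V : topologicalType) (f : T -> U) (g : T -> V) :
  continuous f -> continuous g -> continuous (fun x => (f x, g x)).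
Proof. by move=> cf cg x; apply: cvg_pair; [exact: cf| exact: cg]. Qed.
Arguments pair_cont {T U V f g}.

Lemma id_cont (T : topologicalType) : continuous (@id T).
Proof. by move=> x; apply: cvg_id. Qed.
Lemma cst_cont (T U : topologicalType) (u : U) : continuous (fun _ : T => u).
Proof. by move=> x; apply: cvg_cst. Qed.
Arguments cst_cont {T U}.
Lemma pairr_cont (T U : topologicalType) (u : U) : continuous (fun x : T => (x, u)).
Proof. exact: (pair_cont (@id_cont T) (cst_cont u)). Qed.

Section Main.
Variable R : realType.
Variable X : metricType R.
Variables a b c : set X.
Hypotheses (a_closed : closed a) (b_closed : closed b) (c_closed : closed c).
Hypotheses (a_ne : a !=set0) (b_ne : b !=set0) (c_ne : c !=set0).
Hypothesis abc0 : a `&` b `&` c = set0.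

Lemma side_of_zero (w : X * ('rV[R]_3 * R)) i :
  Xprime a b c w -> fmap a b c w.1 ord0 i = 0 -> side i w.2.1.
Proof.
move=> [bv [/andP [t0 t1] e]] f0.
have S : simplexT w.2.1 by move: bv; rewrite bdTE => -[].
split => //.
have v0 : 0 <= w.2.1 ord0 i by case: S => h _; apply: h.
have := f_equal (fun M : 'rV[R]_3 => M ord0 i) e => /=; rewrite hmapE f0.
have h1 : 0 <= (1 - w.2.2) * w.2.1 ord0 i by apply: mulr_ge0 => //; rewrite subr_ge0.
move=> h.
have tz : w.2.2 = 0 by lra.
by move: h; rewrite tz subr0 mul1r mul0r addr0.
Qed.

Lemma fibre_conn (p : X) : connected (Xprime a b c `&` fst @^-1` [set p]).
Proof.
set F := Xprime a b c `&` fst @^-1` [set p].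
have [[w0 [[bv0 [/andP [t00 t01] e0]] p0] lt0]|nlt] :=
  pselect (exists2 w0, F w0 & w0.2.2 < 1).
  suff -> : F = [set w0] by apply: connected1.
  apply/seteqP; split => w; last by move=> ->; split => //; split => //; split => //; apply/andP.
  move=> [[bv [/andP [t0 t1] e]] pw].
  have htt : w.2.2 = w0.2.2.
    apply: (@hmap_t _ _ _ _ _ bv bv0 t1 t01); by rewrite e e0; congr fmap; exact: (etrans pw (esym p0)).
  have vv : w.2.1 = w0.2.1.
    apply: (@hmap_v _ _ _ _ lt0); by rewrite -{1}htt e e0; congr fmap; exact: (etrans pw (esym p0)).
  move: w w0 pw p0 htt vv {bv e e0 bv0 lt0 t0 t1 t00 t01} => [w1 [w2 w3]] [u1 [u2 u3]] /= -> -> -> -> //.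
have [[w0 [[bv0 [/andP [t00 t01] e0]] p0]]|ne] := pselect (exists w0, F w0); last first.
  suff -> : F = set0 by apply: connected0.
  by apply/seteqP; split => // w hw; apply: ne; exists w.
have t1 : w0.2.2 = 1.
  apply/eqP; rewrite eq_le t01 /=; rewrite leNgt; apply/negP => h; apply: nlt.
  by exists w0 => //; split => //; split => //; split => //; apply/andP.
suff -> : F = [set (p, (v, 1)) | v in @bdT R].
  apply: connected_continuous_connected; first exact: connected_bdT.
  apply: continuous_subspaceT; apply: pair_cont; [exact: cst_cont| exact: pairr_cont].
apply/seteqP; split => w.
  move=> [[bv [/andP [t0 t1'] e]] pw]; exists w.2.1 => //.
  have tw : w.2.2 = 1.
    apply/eqP; rewrite eq_le t1' /=; rewrite leNgt; apply/negP => h; apply: nlt.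
    by exists w => //; split => //; split => //; split => //; apply/andP.
  by move: w pw tw {bv e t0 t1'} => [w1 [w2 w3]] /= -> ->.
move=> [v bv <-]; split => //=; split => //; split.
  by apply/andP; split; [exact: ler01| exact: lexx].
by rewrite hmap1 -(@hmap1 _ w0.2.1) -t1 e0 (p0 : w0.1 = p).
Qed.
End Main.

Theorem mainTheorem6 (R : realType) (X : metricType R)
  (X_compact : compact [set: X]) (X_connected : connected [set: X])
  (X_nonempty : [set: X] !=set0)
  (rho_le1 : forall x y : X, mdist x y <= 1)
  (a b c : set X)
  (a_closed : closed a) (b_closed : closed b) (c_closed : closed c)
  (a_ne : a !=set0) (b_ne : b !=set0) (c_ne : c !=set0)
  (abc0 : a `&` b `&` c = set0) :
  let X' := Xprime a b c in
  let q := @fst X ('rV[R]_3 * R) in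
  let x := Xside a b c ord0 in
  let y := Xside a b c (lift ord0 ord0) in
  let z := Xside a b c ord_max in
  [/\ X' !=set0, compact X' & connected X'] /\
  [/\ {within X', continuous q},
      (forall G, closed G -> closed (q @` (X' `&` G))),
      (forall p : X, connected (X' `&` q @^-1` [set p]))
    & q @` X' = [set: X]] /\
  [/\ X' `&` q @^-1` a `<=` x, X' `&` q @^-1` b `<=` y,
      X' `&` q @^-1` c `<=` z, x `&` y `&` z = set0
    & x `|` y `|` z = X'].
Proof.
move=> X' q x y z.
have Xc : compact X' by apply: Xprime_compact.
have qcont : {within X', continuous q} by apply: continuous_subspaceT; exact: fst_cont.
have qclosed : forall G, closed G -> closed (q @` (X' `&` G)).
  move=> G cG; apply: compact_closed; first exact: metric_hausdorff.
  apply: continuous_compact; first by apply: continuous_subspaceT; exact: fst_cont.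
  exact: compact_closedI Xc cG.
have fib : forall p, connected (X' `&` q @^-1` [set p]) by move=> p; apply: fibre_conn.
have surj : q @` X' = [set: X].
  apply/seteqP; split => // p _.
  have [v [t [bv [ut e]]]] := @hmap_surj _ _ (@fmap_simplex _ _ _ _ _ a_closed b_closed c_closed a_ne b_ne c_ne abc0 p).
  by exists (p, (v, t)).
have X'ne : X' !=set0.
  have [p _] := X_nonempty.
  have : (q @` X') p by rewrite surj.
  by case=> w hw _; exists w.
split; first by split => //; apply: conn_monotone qclosed surj X_connected fib.
split; first by split.
have sz : forall i w, X' w -> fmap a b c w.1 ord0 i = 0 -> Xside a b c i w.
  by move=> i w hw h0; split => //; exact: (@side_of_zero _ _ a b c w i hw h0).
split.
- move=> w [hw ha]; apply: sz => //.
  by rewrite fmap0 (rho_in0 _ _ _ _ ha) mul0r.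
- move=> w [hw ha]; apply: sz => //.
  by rewrite fmap1 (rho_in0 _ _ _ _ ha) mul0r.
- move=> w [hw ha]; apply: sz => //.
  by rewrite fmap2 (rho_in0 _ _ _ _ ha) mul0r.
- apply/seteqP; split => // w [[[_ [[_ s1] h0]] [_ [_ h1]]] [_ [_ h2]]].
  by move: s1; rewrite /= sum3 h0 h1 h2 !addr0 => /eqP; rewrite eq_sym oner_eq0.
- apply/seteqP; split => w.
    by move=> [[[h _]|[h _]]|[h _]].
  move=> hw; have := hw => -[bv _]; move: bv; rewrite bdT_sides => -[[h|h]|h].
  + by left; left.
  + by left; right.
  + by right.
Qed.
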